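(* Let $K_{m_1,m_2}$ be the complete bipartite graph with bipartition $(X,Y)$, $X=\{x_1,\dots,x_{m_1}\}$, $Y=\{y_1,\dots,y_{m_2}\}$, where $2\le m_1\le m_2$. Let $s$ and $i$ be integers with $\max\{1,s-m_2\}\le i\le \min\{m_1,s-1\}$ and $s\ge m_2-m_1+3$, and let $S_i=\{x_1,\dots,x_i,y_1,\dots,y_{s-i}\}$. If $2i> m_1+s-m_2$, then $$\kappa^*_{K_{m_1,m_2}}(S_i)\ge\begin{cases} m_1-i+\left\lfloor\frac{i}{2}\right\rfloor, & \text{if } m_1+s-m_2<2i\le \frac{4(m_1+s-m_2)}{3},\\[2pt] m_2-s+i, & \text{if } \frac{4(m_1+s-m_2)}{3}<2i\le 2(m_1+s-m_2),\\[2pt] m_1, & \text{if } 2i>2(m_1+s-m_2).\end{cases}$$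
   Context: For $S\subseteq V(G)$ with $|S|\ge 2$, an $S$-Steiner tree of $G$ is a subtree $T$ of $G$ with $S\subseteq V(T)$ all of whose leaves belong to $S$. A family of $S$-Steiner trees $T_1,\dots,T_k$ is completely independent if for all $1\le p<q\le k$: $E(T_p)\cap E(T_q)=\emptyset$, $V(T_p)\cap V(T_q)=S$, and for any two vertices $x_1,x_2\in S$ the $(x_1,x_2)$-paths in $T_p$ and in $T_q$ are internally disjoint. $\kappa^*_G(S)$ is the maximum number of trees in a completely independent family of $S$-Steiner trees in $G$. *)

(* Defs.v *)
(* Simple graphs on a finType T given by a symmetric
   irreflexive adjacency relation adj; subgraphs given by a vertex set
   V : {set T} and an edge set E : {set {set T}} of 2-element sets. *)
From Stdlib Require Import ClassicalEpsilon.
From mathcomp Require Import all_boot.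
Set Implicit Arguments. Unset Strict Implicit. Unset Printing Implicit Defensive.

Section Graphs.
Variable T : finType.
Variable adj : rel T.

Definition pb (P : Prop) : bool :=
  if excluded_middle_informative P then true else false.

Definition is_edge (e : {set T}) : Prop := exists x y, adj x y /\ e = [set x; y].

Definition subgraph (V : {set T}) (E : {set {set T}}) : Prop :=
  forall e, e \in E -> is_edge e /\ e \subset V.

Definition erel (E : {set {set T}}) : rel T := fun a b => [set a; b] \in E.

Definition is_path (E : {set {set T}}) (x y : T) (p : seq T) : bool :=
  [&& path (erel E) x p, last x p == y & uniq (x :: p)].

Definition connected_sg (V : {set T}) (E : {set {set T}}) : Prop :=
  forall x y, x \in V -> y \in V -> exists p, is_path E x y p.

(* a cycle x :: p (length >= 3) closed by the edge {last, x} *)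
Definition has_cycle (E : {set {set T}}) : Prop :=
  exists x p, 2 <= size p /\ path (erel E) x p /\ uniq (x :: p) /\
              [set last x p; x] \in E.

Definition is_tree (V : {set T}) (E : {set {set T}}) : Prop :=
  [/\ subgraph V E, V != set0, connected_sg V E & ~ has_cycle E].

Definition degree (E : {set {set T}}) (v : T) : nat := #|[set e in E | v \in e]|.

Definition steiner_tree (S : {set T}) (t : {set T} * {set {set T}}) : Prop :=
  [/\ is_tree t.1 t.2, S \subset t.1 &
      forall v, v \in t.1 -> degree t.2 v = 1 -> v \in S].

Definition completely_independent (S : {set T}) (k : nat)
    (F : 'I_k -> {set T} * {set {set T}}) : Prop :=
  (forall j, steiner_tree S (F j)) /\
  forall p q : 'I_k, p != q ->
    [/\ (F p).2 :&: (F q).2 = set0,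
        (F p).1 :&: (F q).1 = S &
        forall x1 x2, x1 \in S -> x2 \in S ->
          forall P Q, is_path (F p).2 x1 x2 P -> is_path (F q).2 x1 x2 Q ->
          forall z, z \in P -> z != x2 -> z \in Q -> False].

(* Such a family has pairwise edge-disjoint trees, each
   with >= 1 edge when |S| >= 2, so its size is at most #|{set T}|. *)
Definition kappa_star (S : {set T}) : nat :=
  \max_(k < #|{set T}|.+1 |
        pb (exists F : 'I_k -> {set T} * {set {set T}},
              completely_independent S F)) k.

End Graphs.

Definition Kbip_adj (m1 m2 : nat) : rel ('I_m1 + 'I_m2) :=
  fun u v => match u, v with
             | inl _, inr _ | inr _, inl _ => true
             | _, _ => false end.

(* S_i = {x_1..x_i, y_1..y_(s-i)} (0-indexed) *)
Definition S_set (m1 m2 s i : nat) : {set 'I_m1 + 'I_m2} :=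
  [set u : 'I_m1 + 'I_m2 |
     match u with inl x => (x : nat) < i | inr y => (y : nat) < s - i end].

(* Main.v *)
From Stdlib Require Import Classical ClassicalEpsilon.
Require Import Defs.
From mathcomp Require Import all_boot zify.
Set Implicit Arguments. Unset Strict Implicit. Unset Printing Implicit Defensive.

Section Gen.
Variable T : finType.

Lemma set2_eq (a b c e : T) : [set a; b] = [set c; e] -> (a = c /\ b = e) \/ (a = e /\ b = c).
Proof.
move=> H.
have ha : a \in [set c; e] by rewrite -H !inE eqxx.
have hb : b \in [set c; e] by rewrite -H !inE eqxx orbT.
have hc : c \in [set a; b] by rewrite H !inE eqxx.
have he : e \in [set a; b] by rewrite H !inE eqxx orbT.
move: ha hb hc he; rewrite !inE.
case/orP=> /eqP ha; case/orP=> /eqP hb; case/orP=> /eqP hc; case/orP=> /eqP he; subst; auto.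
Qed.

Lemma erel_sym (E : {set {set T}}) : symmetric (erel E).
Proof. by move=> a b; rewrite /erel setUC. Qed.

Variable adj : rel T.
Variables (V : {set T}) (r : T) (par : T -> T) (d : T -> nat).
Definition Et := [set [set v; par v] | v in V :\ r].
Hypothesis rV : r \in V.
Hypothesis parV : forall v, v \in V -> v != r ->
   [/\ par v \in V, adj v (par v) & d (par v) < d v].

Lemma Et_edge a b : [set a; b] \in Et -> exists v, [/\ v \in V, v != r &
   ((a = v /\ b = par v) \/ (a = par v /\ b = v))].
Proof.
case/imsetP=> v; rewrite !inE => /andP[vr vV] /set2_eq H.
by exists v; split.
Qed.

Lemma erel_dir a b : erel Et a b -> (b = par a /\ d b < d a) \/ (a = par b /\ d a < d b).
Proof.
rewrite /erel => /Et_edge [v [vV vr [[-> ->]|[-> ->]]]]; have [_ _ h] := parV vV vr; auto.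
Qed.

Lemma up_path n v : d v < n -> v \in V -> exists p, path (erel Et) v p /\ last v p = r.
Proof.
elim: n v => // n IH v dv vV.
case: (eqVneq v r) => [->|vr]; first by exists [::].
have [pV _ dp] := parV vV vr.
have [p [pp lp]] := IH (par v) (leq_trans dp dv) pV.
exists (par v :: p); split => //=; rewrite pp andbT /erel.
by apply/imsetP; exists v => //; rewrite !inE vr.
Qed.


Lemma last_rev_belast (y : T) p : last (last y p) (rev (belast y p)) = y.
Proof. by case: p => //= z p; rewrite rev_cons last_rcons. Qed.

Lemma tree_connected : connected_sg V Et.
Proof.
move=> x y xV yV.
have [px [ppx lpx]] := up_path (ltnSn (d x)) xV.
have [py [ppy lpy]] := up_path (ltnSn (d y)) yV.
have hr : path (erel Et) r (rev (belast y py)).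
  rewrite -lpy rev_path; apply: etrans ppy; apply: eq_path => a b; exact: erel_sym.
have hw : path (erel Et) x (px ++ rev (belast y py)) by rewrite cat_path ppx lpx hr.
have lw : last x (px ++ rev (belast y py)) = y by rewrite last_cat lpx -lpy last_rev_belast.
case: (shortenP hw) lw => p' pp' up' _ lw.
by exists p'; rewrite /is_path pp' up' lw eqxx.
Qed.

Lemma exists_max (s : seq T) : s != [::] -> exists2 w, w \in s & forall z, z \in s -> d z <= d w.
Proof.
elim: s => // a s IH _.
case: (eqVneq s [::]) => [->|sn].
  by exists a; rewrite ?mem_head // => z; rewrite inE => /eqP->.
have [w ws hw] := IH sn.
case: (leqP (d a) (d w)) => h.
  exists w; first by rewrite inE ws orbT.
  by move=> z; rewrite inE => /orP[/eqP->|/hw].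
exists a; first exact: mem_head.
move=> z; rewrite inE => /orP[/eqP->//|/hw h2]; exact: leq_trans h2 (ltnW h).
Qed.

Lemma tree_acyclic : ~ has_cycle Et.
Proof.
case=> x [p [sp [pp [up ce]]]].
have cy : cycle (erel Et) (x :: p) by rewrite /= rcons_path pp.
have [w wc hw] := exists_max (s:=x :: p) isT.
case: (rot_to wc) => n q hq.
have cq : cycle (erel Et) (w :: q) by rewrite -hq rot_cycle.
have uq : uniq (w :: q) by rewrite -hq rot_uniq.
have sq : 2 <= size q.
  have := size_rot n (x :: p); rewrite hq /= => /eqP; rewrite eqSS => /eqP ->; exact: sp.
have mq : forall z, z \in q -> d z <= d w.
  by move=> z zq; apply: hw; rewrite -(mem_rot n) hq inE zq orbT.
case: q hq cq uq sq mq => // y q' _ cq uq sq mq.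
move: cq; rewrite /= rcons_path => /andP[e1 /andP[pq e2]].
have yq : d y <= d w by apply: mq; rewrite mem_head.
have lq : last y q' \in y :: q' by apply: mem_last.
have ld : d (last y q') <= d w by apply: mq.
have ypar : y = par w.
  case: (erel_dir e1) => [[]//|[_ h]]; by rewrite ltnNge yq in h.
have lpar : last y q' = par w.
  case: (erel_dir e2) => [[_ h]|[]//]; by rewrite ltnNge ld in h.
case: q' sq uq lpar lq {pq e2 ld mq} => // z q'' _ uq lpar _.
move: lpar => /= lpar.
have h : last z q'' \in z :: q'' by apply: mem_last.
rewrite lpar -ypar in h.
move: uq => /= /andP[_ /andP[yn _]].
by rewrite h in yn.
Qed.

Lemma tree_is_tree : is_tree adj V Et.
Proof.
split.
- move=> e /imsetP [v]; rewrite !inE => /andP[vr vV] ->.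
  have [pV a _] := parV vV vr; split; first by exists v, (par v).
  by apply/subsetP=> z; rewrite !inE => /orP[]/eqP->.
- by apply/set0Pn; exists r.
- exact: tree_connected.
- exact: tree_acyclic.
Qed.

Lemma Et_distinct w1 w2 : w1 \in V :\ r -> w2 \in V :\ r -> w1 != w2 ->
  [set w1; par w1] != [set w2; par w2].
Proof.
rewrite !inE => /andP[n1 v1] /andP[n2 v2] ne; apply/eqP => /set2_eq [[e _]|[e1 e2]].
  by rewrite e eqxx in ne.
have [_ _ h1] := parV v1 n1; have [_ _ h2] := parV v2 n2.
move: h1 h2; rewrite -e1 -e2 => h1 h2; have := ltn_trans h1 h2; by rewrite ltnn.
Qed.

Definition inner v := v = r \/ exists2 w, w \in V :\ r & par w = v.

Lemma deg_inner v : 1 < degree Et v -> inner v.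
Proof.
move=> hd; case: (classic (inner v)) => // ni; exfalso.
suff : #|[set e in Et | v \in e]| <= 1 by rewrite leqNgt hd.
rewrite -(cards1 [set v; par v]); apply: subset_leq_card; apply/subsetP => e.
rewrite !inE => /andP[/imsetP[w wV ->]] vw; rewrite !inE in vw.
case/orP: vw => /eqP vw; first by rewrite vw.
by case: ni; right; exists w.
Qed.

Lemma deg_ge2 v w1 w2 : w1 \in V :\ r -> w2 \in V :\ r -> w1 != w2 ->
  v \in [set w1; par w1] -> v \in [set w2; par w2] -> 1 < degree Et v.
Proof.
move=> h1 h2 ne m1 m2; apply/card_gt1P; exists [set w1; par w1], [set w2; par w2].
split; last exact: Et_distinct.
- by rewrite inE m1 andbT; apply/imsetP; exists w1.
- by rewrite inE m2 andbT; apply/imsetP; exists w2.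
Qed.

End Gen.

Lemma path_internal (T : finType) (E : {set {set T}}) x1 x2 P z :
  is_path E x1 x2 P -> z \in P -> z != x2 -> 1 < degree E z.
Proof.
case/and3P => pp /eqP lp up zP zx.
case/splitPr: zP pp lp up => p1 p2 pp lp up.
move: pp; rewrite cat_path /= => /and3P[_ e1 e2].
move: lp; rewrite last_cat /=.
case: p2 e2 up => [|w p2]; first by move=> _ _ /= zx2; rewrite zx2 eqxx in zx.
move=> /andP[e2 _] up _.
have ne : last x1 p1 != w.
  move: up; rewrite -cat_cons cat_uniq => /and3P[_ h _].
  apply/eqP => ew; move/hasPn: h => /(_ w); rewrite !inE eqxx orbT /= => /(_ isT).
  by rewrite -in_cons -ew mem_last.
apply/card_gt1P; exists [set last x1 p1; z], [set z; w]; split.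
- by rewrite inE; apply/andP; split; [exact: e1 | rewrite !inE eqxx ?orbT].
- by rewrite inE; apply/andP; split; [exact: e2 | rewrite !inE eqxx ?orbT].
apply/eqP => /set2_eq [[a b]|[a _]]; first by rewrite a b eqxx in ne.
by rewrite a eqxx in ne.
Qed.

Section Fam.
Variables (T : finType) (adj : rel T) (S : {set T}) (k : nat).
Variables (V : nat -> {set T}) (r : nat -> T) (par : nat -> T -> T) (d : nat -> T -> nat).
Hypothesis hr : forall t, t < k -> r t \in V t.
Hypothesis hpar : forall t v, t < k -> v \in V t -> v != r t ->
   [/\ par t v \in V t, adj v (par t v) & d t (par t v) < d t v].
Hypothesis hS : forall t, t < k -> S \subset V t.
Hypothesis hdeg : forall t v, t < k -> v \in V t -> v \notin S ->
  exists w1 w2, [/\ w1 \in V t :\ r t, w2 \in V t :\ r t, w1 != w2,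
     v \in [set w1; par t w1] & v \in [set w2; par t w2]].
Hypothesis hV : forall t t', t < k -> t' < k -> t != t' -> V t :&: V t' = S.
Hypothesis hE : forall t t' v w, t < k -> t' < k -> t != t' ->
  v \in V t :\ r t -> w \in V t' :\ r t' -> [set v; par t v] != [set w; par t' w].
Hypothesis hcore : forall t t' v, t < k -> t' < k -> t != t' -> v \in S ->
  inner (V t) (r t) (par t) v -> inner (V t') (r t') (par t') v -> False.

Definition famF (t : 'I_k) := (V t, Et (V t) (r t) (par t)).

Lemma fam_ci : completely_independent adj S famF.
Proof.
split.
- move=> [t tk]; rewrite /famF /=; split => /=.
  + by apply: tree_is_tree; [apply: hr | move=> v; apply: hpar].
  + exact: hS.
  + move=> v vV dv; apply/negPn/negP => nS.
    have [w1 [w2 [h1 h2 ne m1 m2]]] := hdeg tk vV nS.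
    have := deg_ge2 (fun v => hpar (v:=v) tk) h1 h2 ne m1 m2; by rewrite dv.
move=> [p pk] [q qk] /= pq.
have pq' : p != q by [].
split => /=.
- apply/setP => e; rewrite !inE; apply/negP => /andP[/imsetP[v vV ->] /imsetP[w wV ew]].
  by have := hE pk qk pq' vV wV; rewrite ew eqxx.
- exact: hV.
move=> x1 x2 _ _ P Q hP hQ z zP zx zQ.
have dP := path_internal hP zP zx.
have zQ' : z \in Q by [].
have dQ := path_internal hQ zQ zx.
have iP := deg_inner dP.
have iQ := deg_inner dQ.
have zV : forall t, t < k -> inner (V t) (r t) (par t) z -> z \in V t.
  move=> t tk [->|[w]]; first exact: hr.
  rewrite !inE => /andP[wr wV] <-; by have [] := hpar tk wV wr.
have zS : z \in S by rewrite -(hV pk qk pq') inE (zV _ pk iP) (zV _ qk iQ).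
exact: (hcore pk qk pq' zS iP iQ).
Qed.

Lemma fam_kappa : k <= #|{set T}| -> k <= kappa_star adj S.
Proof.
move=> hk; rewrite /kappa_star.
have kk : k < #|{set T}|.+1 by [].
apply: (@leq_bigmax_cond _ _ (fun j : 'I_#|{set T}|.+1 => nat_of_ord j) (Ordinal kk)).
rewrite /pb; case: excluded_middle_informative => // [[]].
by exists famF; exact: fam_ci.
Qed.

End Fam.

Section Inst.
Variables (n1 n2 s i k nG a : nat) (phi : nat -> nat -> nat).
Local Notation m1 := n1.+1.
Local Notation m2 := n2.+1.
Local Notation J := (s - i).
Local Notation T := ('I_m1 + 'I_m2)%type.
Local Notation S := (S_set m1 m2 s i).

Hypothesis Hi : 2 <= i.
Hypothesis Him : i <= m1.
Hypothesis HJ : 1 <= J.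
Hypothesis HJm : J + nG <= m2.
Hypothesis HnG : nG <= k.
Hypothesis Ha : a <= nG.
Hypothesis Hphi_b : forall t q, t < nG -> q < J -> phi t q < m1.
Hypothesis Hphi_0 : forall t q, t < nG -> q < J -> phi t q < i \/ phi t q = phi t 0.
Hypothesis Hphi_inj : forall t t' q q', t < nG -> t' < nG -> q < J -> q' < J ->
  phi t q = phi t' q' -> t = t'.
Hypothesis HH : forall t, nG <= t -> t < k -> 2 * (t - a) + 1 < i /\ 2 * (t - nG) + 1 < J.
Hypothesis Hphi_H : forall t t' q, t < nG -> nG <= t' -> t' < k -> q < J -> phi t q < i ->
  odd (phi t q) = odd q /\ (phi t q)./2 != t' - a.

Definition X (r : nat) : T := inl (inord r).
Definition Y (q : nat) : T := inr (inord q).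

Definition g t := Y (J + t).
Definition rt t := if t < nG then g t else X (2 * (t - a)).
Definition pr t (v : T) : T :=
  if t < nG then (match v with inl _ => g t | inr y => X (phi t y) end)
  else match v with inr y => X (2 * (t - a) + odd y) | inl x => Y (2 * (t - nG) + ~~ odd x) end.
Definition dp t (v : T) : nat :=
  if t < nG then (match v with inl _ => 1 | inr y => if y < J then 2 else 0 end)
  else match v with
       | inl x => if (x : nat) == 2 * (t - a) then 0 else if odd x then 2 else 4
       | inr y => if odd y then 3 else 1 end.
Definition Vt t : {set T} :=
  if t < nG then [set v | (v \in S) || (v == g t) || (v == X (phi t 0))] else S.

Definition ex t (v : T) : nat :=
  if t < nG then (match v with inl x => (x : nat) | inr y => phi t y end)
  else match v with inr y => 2 * (t - a) + odd y | inl x => (x : nat) end.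
Definition ey t (v : T) : nat :=
  if t < nG then (match v with inl _ => J + t | inr y => (y : nat) end)
  else match v with inr y => (y : nat) | inl x => 2 * (t - nG) + ~~ odd x end.

Lemma inSE (v : T) : (v \in S) = match v with inl x => x < i | inr y => y < J end.
Proof. by rewrite inE. Qed.

Lemma XK r : r < m1 -> nat_of_ord (inord r : 'I_m1) = r.
Proof. exact: inordK. Qed.
Lemma YK q : q < m2 -> nat_of_ord (inord q : 'I_m2) = q.
Proof. exact: inordK. Qed.

Lemma eqX (x : 'I_m1) r : r < m1 -> (inl x == X r) = ((x : nat) == r).
Proof.
move=> h; rewrite /X; apply/eqP/eqP => [[->]|e]; first by rewrite XK.
by congr inl; apply: val_inj; rewrite /= XK.
Qed.
Lemma eqY (y : 'I_m2) q : q < m2 -> (inr y == Y q) = ((y : nat) == q).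
Proof.
move=> h; rewrite /Y; apply/eqP/eqP => [[->]|e]; first by rewrite YK.
by congr inr; apply: val_inj; rewrite /= YK.
Qed.

Lemma inV t (v : T) : v \in Vt t ->
  if t < nG then
    match v with inl x => x < i \/ (x : nat) = phi t 0 | inr y => y < J \/ (y : nat) = J + t end
  else match v with inl x => x < i | inr y => y < J end.
Proof.
rewrite /Vt; case: ifP => tn; first last.
  by case: v => [x|y]; rewrite inSE.
have b1 : J + t < m2 by lia.
have b0 : phi t 0 < m1 by apply: Hphi_b; lia.
rewrite !inE; case: v => [x|y]; rewrite /g ?eqX ?eqY //=.
- by case/orP => [/orP[->|//]|/eqP ->]; auto.
- rewrite orbF; by case/orP => [->|/eqP ->]; auto.
Qed.

Lemma odd2 n (b : bool) : odd (2 * n + b) = b.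
Proof. case: b; lia. Qed.

Lemma XE (x : 'I_m1) : X x = inl x.
Proof. by rewrite /X inord_val. Qed.
Lemma YE (y : 'I_m2) : Y y = inr y.
Proof. by rewrite /Y inord_val. Qed.

Lemma hr_i t : t < k -> rt t \in Vt t.
Proof.
move=> tk; rewrite /rt /Vt; case: ifP => tn; first by rewrite !inE eqxx orbT.
have [h1 _] : 2 * (t - a) + 1 < i /\ 2 * (t - nG) + 1 < J by apply: HH => //; rewrite leqNgt tn.
by rewrite inSE /X XK; lia.
Qed.

Lemma hS_i t : S \subset Vt t.
Proof.
rewrite /Vt; case: ifP => tn //; apply/subsetP => v vS; by rewrite inE vS.
Qed.

Lemma hpar_i t v : t < k -> v \in Vt t -> v != rt t ->
  [/\ pr t v \in Vt t, Kbip_adj v (pr t v) & dp t (pr t v) < dp t v].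
Proof.
move=> tk vV vr; have := inV vV; move: vV vr; rewrite /Vt /rt /pr /dp; case: ifP => tn.
- have b1 : J + t < m2 by lia.
  case: v => [x|y] vV vr hv.
  + split => //; first by rewrite !inE eqxx orbT.
    by rewrite /g /Y YK //; case: ifP => //; lia.
  + have yJ : y < J.
      case: hv => // e; by rewrite /g eqY // e eqxx in vr.
    have b2 : phi t y < m1 by apply: Hphi_b; lia.
    split => //; last by rewrite yJ /X.
    case: (Hphi_0 (t:=t) (q:=y)) => //; try lia.
    * by move=> h; rewrite !inE /X XK // h.
    * by move=> ->; rewrite !inE eqxx orbT.
- have [h1 h2] : 2 * (t - a) + 1 < i /\ 2 * (t - nG) + 1 < J by apply: HH => //; rewrite leqNgt tn.
  case: v => [x|y] vV vr hv.
  + have xa : (x : nat) != 2 * (t - a) by rewrite eqX // in vr; lia.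
    have b : 2 * (t - nG) + ~~ odd x < m2 by lia.
    rewrite /Y; split => //; first by rewrite inSE YK //; lia.
    rewrite YK // (negbTE xa) odd2; by case: (odd x).
  + have b : 2 * (t - a) + odd y < m1 by lia.
    rewrite /X; split => //; first by rewrite inSE XK //; lia.
    rewrite XK // odd2; case: (odd y); case: ifP => //; lia.
Qed.

Lemma edgeE t v : t < k -> v \in Vt t -> v != rt t ->
  [set v; pr t v] = [set X (ex t v); Y (ey t v)].
Proof.
move=> _ _ _; rewrite /pr /ex /ey; case: ifP => tn; case: v => [x|y];
  by rewrite ?XE ?YE // setUC.
Qed.

Lemma bounds t v : t < k -> v \in Vt t -> v != rt t -> ex t v < m1 /\ ey t v < m2.
Proof.
move=> tk vV vr; have := inV vV; move: vr; rewrite /ex /ey /rt.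
case: ifP => tn.
- have b1 : J + t < m2 by lia.
  case: v vV => [x|y] vV vr hv; split => //; try lia.
  have yJ : y < J.
    case: hv => // e; by rewrite /g eqY // e eqxx in vr.
  by apply: Hphi_b; lia.
- have [h1 h2] : 2 * (t - a) + 1 < i /\ 2 * (t - nG) + 1 < J by apply: HH => //; rewrite leqNgt tn.
  case: v vV => [x|y] vV vr hv; split => //; lia.
Qed.

Lemma set_XY p q p' q' : p < m1 -> p' < m1 -> q < m2 -> q' < m2 ->
  [set X p; Y q] = [set X p'; Y q'] -> p = p' /\ q = q'.
Proof.
move=> h1 h2 h3 h4 /set2_eq [[e1 e2]|[e1 e2]]; last by [].
move: e1 e2; rewrite /X /Y => [[e1] [e2]].
by split; [rewrite -(XK h1) -(XK h2) e1 | rewrite -(YK h3) -(YK h4) e2].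
Qed.


Lemma hdeg_i t v : t < k -> v \in Vt t -> v \notin S ->
  exists w1 w2, [/\ w1 \in Vt t :\ rt t, w2 \in Vt t :\ rt t, w1 != w2,
     v \in [set w1; pr t w1] & v \in [set w2; pr t w2]].
Proof.
move=> tk vV vS; have := inV vV.
case: ifP => tn; last first.
  by case: v vV vS => [x|y] _; rewrite inSE => /negP.
have b1 : J + t < m2 by lia.
rewrite /rt /pr tn.
case: v vV vS => [x|y] vV; rewrite inSE => /negP vS.
- case => [//|xe].
  have b0 : 0 < J by lia.
  exists (inl x), (Y 0); split.
  + by rewrite !inE vV andbT.
    rewrite in_setD1; apply/andP; split.
      rewrite /g /Y; apply/eqP => [[]] /(congr1 val) /=; rewrite !YK //; lia.
    rewrite /Vt tn !inE /Y YK /=; lia.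
  + by [].
  + by rewrite !inE eqxx.
  + by rewrite /Y YK // !inE -xe /X inord_val eqxx orbT.
- case => [//|ye].
  have -> : inr y = g t by apply/eqP; rewrite /g eqY // ye.
  exists (X 0), (X 1); split.
  + rewrite in_setD1 /Vt tn !inE /X /g /Y /= XK //; lia.
  + rewrite in_setD1 /Vt tn !inE /X /g /Y /= XK //; lia.
  + rewrite /X; apply/eqP => [[]] /(congr1 val) /=; rewrite !XK //; lia.
  + by rewrite /X /= !inE eqxx orbT.
  + by rewrite /X /= !inE eqxx orbT.
Qed.

Lemma hV_i t t' : t < k -> t' < k -> t != t' -> Vt t :&: Vt t' = S.
Proof.
move=> tk tk' ne; apply/setP => v; rewrite inE.
apply/andP/idP => [[h1 h2]|h]; last by split; apply: (subsetP (hS_i _)).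
apply/negPn/negP => vS.
have := inV h1; have := inV h2.
case: ifP => tn'; last by case: v h1 h2 vS => [x|y] _ _; rewrite inSE => /negP.
case: ifP => tn; last by case: v h1 h2 vS => [x|y] _ _; rewrite inSE => /negP.
case: v h1 h2 vS => [x|y] _ _; rewrite inSE => /negP vS [//|e1] [//|e2].
- have := Hphi_inj (t:=t) (t':=t') (q:=0) (q':=0); rewrite -e1 -e2; lia.
- lia.
Qed.

Lemma hE_i t t' v w : t < k -> t' < k -> t != t' ->
  v \in Vt t :\ rt t -> w \in Vt t' :\ rt t' -> [set v; pr t v] != [set w; pr t' w].
Proof.
move=> tk tk' ne; rewrite !inE => /andP[vr vV] /andP[wr wV].
rewrite (edgeE tk vV vr) (edgeE tk' wV wr).
have [b1 b2] := bounds tk vV vr; have [b3 b4] := bounds tk' wV wr.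
apply/eqP => /set_XY => /(_ b1 b3 b2 b4) [] {b1 b2 b3 b4}.
have := inV vV; have := inV wV; move: vr wr.
rewrite /ex /ey /rt.
case: ifP => tn; case: ifP => tn'.
- case: v vV => [x|y] _; case: w wV => [x'|y'] _ vr wr hw hv; try lia.
  + case: hv => [hv|hv]; last by rewrite /g eqY ?hv ?eqxx in vr; lia.
    case: hw => [hw|hw]; last by rewrite /g eqY ?hw ?eqxx in wr; lia.
    move=> e1 e2; have := Hphi_inj (t:=t) (t':=t') (q:=y) (q':=y'); lia.
- have [h1 h2] : 2 * (t' - a) + 1 < i /\ 2 * (t' - nG) + 1 < J by apply: HH => //; rewrite leqNgt tn'.
  case: v vV => [x|y] _; case: w wV => [x'|y'] _ vr wr hw hv; try lia.
  + case: hv => [hv|hv]; last by rewrite /g eqY ?hv ?eqxx in vr; lia.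
    move=> e1 e2; have tn2 : nG <= t' by rewrite leqNgt tn'.
    have hl : phi t y < i by lia.
    have [o1 o2] := Hphi_H tn tn2 tk' hv hl; lia.
  + case: hv => [hv|hv]; last by rewrite /g eqY ?hv ?eqxx in vr; lia.
    move=> e1 e2; have tn2 : nG <= t' by rewrite leqNgt tn'.
    have hl : phi t y < i by lia.
    have [o1 o2] := Hphi_H tn tn2 tk' hv hl; lia.
- have [h1 h2] : 2 * (t - a) + 1 < i /\ 2 * (t - nG) + 1 < J by apply: HH => //; rewrite leqNgt tn.
  case: v vV => [x|y] _; case: w wV => [x'|y'] _ vr wr hw hv; try lia.
  + case: hw => [hw|hw]; last by rewrite /g eqY ?hw ?eqxx in wr; lia.
    move=> e1 e2; have tn2 : nG <= t by rewrite leqNgt tn.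
    have hl : phi t' y' < i by lia.
    have [o1 o2] := Hphi_H tn' tn2 tk hw hl; lia.
  + case: hw => [hw|hw]; last by rewrite /g eqY ?hw ?eqxx in wr; lia.
    move=> e1 e2; have tn2 : nG <= t by rewrite leqNgt tn.
    have hl : phi t' y' < i by lia.
    have [o1 o2] := Hphi_H tn' tn2 tk hw hl; lia.
- have [h1 h2] : 2 * (t - a) + 1 < i /\ 2 * (t - nG) + 1 < J by apply: HH => //; rewrite leqNgt tn.
  have [h3 h4] : 2 * (t' - a) + 1 < i /\ 2 * (t' - nG) + 1 < J by apply: HH => //; rewrite leqNgt tn'.
  case: v vV => [x|y] _; case: w wV => [x'|y'] _ vr wr hw hv; lia.
Qed.

Lemma inner_i t v : t < k -> v \in S -> inner (Vt t) (rt t) (pr t) v ->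
  match v with
  | inl x => if t < nG then exists2 y, y < J & phi t y = x else (x : nat)./2 = t - a
  | inr y => nG <= t /\ (y : nat)./2 = t - nG end.
Proof.
move=> tk vS [e|[w]]; first subst v.
- move: vS; rewrite /rt; case: ifP => tn.
  + rewrite /g /Y inSE YK; lia.
  + have [h1 h2] : 2 * (t - a) + 1 < i /\ 2 * (t - nG) + 1 < J by apply: HH => //; rewrite leqNgt tn.
    rewrite /X XK; lia.
- rewrite !inE => /andP[wr wV] e; subst v.
  have := inV wV; move: vS wr.
  rewrite /pr /rt; case: ifP => tn.
  + have b1 : J + t < m2 by lia.
    case: w wV => [x|y] _ vS wr hw.
    * by move: vS; rewrite /g /Y inSE YK //; lia.
    * have yJ : y < J.
        case: hw => // e; by rewrite /g eqY // e eqxx in wr.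
      have b2 : phi t y < m1 by apply: Hphi_b; lia.
      by rewrite /X XK //; exists y.
  + have [h1 h2] : 2 * (t - a) + 1 < i /\ 2 * (t - nG) + 1 < J by apply: HH => //; rewrite leqNgt tn.
    case: w wV => [x|y] _ vS wr hw.
    * rewrite /Y YK; lia.
    * rewrite /X XK; lia.
Qed.

Lemma hcore_i t t' v : t < k -> t' < k -> t != t' -> v \in S ->
  inner (Vt t) (rt t) (pr t) v -> inner (Vt t') (rt t') (pr t') v -> False.
Proof.
move=> tk tk' ne vS i1 i2.
have := inner_i tk vS i1; have := inner_i tk' vS i2.
case: v vS {i1 i2} => [x|y] vS; last lia.
rewrite inSE in vS.
case: ifP => tn'; case: ifP => tn.
- move=> [y' y'J e'] [y yJ e].
  have := Hphi_inj tn tn' yJ y'J; rewrite e e'; lia.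
- move=> [y' y'J e'] h.
  have tn2 : nG <= t by rewrite leqNgt tn.
  have hl : phi t' y' < i by lia.
  have [o1 o2] := Hphi_H tn' tn2 tk y'J hl; lia.
- move=> h [y yJ e].
  have tn2 : nG <= t' by rewrite leqNgt tn'.
  have hl : phi t y < i by lia.
  have [o1 o2] := Hphi_H tn tn2 tk' yJ hl; lia.
- have tn2 : nG <= t' by rewrite leqNgt tn'.
  have tn3 : nG <= t by rewrite leqNgt tn.
  lia.
Qed.

Lemma inst_kappa : k <= #|{set T}| -> k <= kappa_star (@Kbip_adj m1 m2) S.
Proof.
move=> hk.
apply: (@fam_kappa _ _ _ k Vt rt pr dp) => //.
- move=> t tk; exact: hr_i.
- move=> t v tk; exact: hpar_i.
- move=> t _; exact: hS_i.
- move=> t v tk; exact: hdeg_i.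
- move=> t t' tk tk'; exact: hV_i.
- move=> t t' v w tk tk'; exact: hE_i.
- move=> t t' v tk tk'; exact: hcore_i.
Qed.

End Inst.

Lemma cardT_bound n1 n2 k : k <= n1.+1 -> k <= #|{set ('I_n1.+1 + 'I_n2.+1)%type}|.
Proof.
move=> hk; have h := @leq_card _ _ (@set1 (('I_n1.+1 + 'I_n2.+1)%type : finType)) (@set1_inj _).
rewrite card_sum !card_ord in h; apply: (leq_trans _ h); lia.
Qed.

Lemma consA_l n1 n2 s i kk : 2 <= i -> i <= n1.+1 -> 1 <= s - i -> s - i <= n2.+1 ->
  kk <= n1.+1 -> kk <= n2.+1 - (s - i) ->
  kk <= kappa_star (@Kbip_adj n1.+1 n2.+1) (S_set n1.+1 n2.+1 s i).
Proof.
move=> h1 h2 h3 h4 hk1 hk2.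
apply: (@inst_kappa n1 n2 s i kk kk 0 (fun t _ => t)); try lia.
exact: cardT_bound.
Qed.

Lemma case1_l n1 n2 s i : 2 <= i -> i <= n1.+1 -> 1 <= s - i -> s - i <= n2.+1 ->
  n1.+1 <= n2.+1 -> n1.+1 - i < n2.+1 - (s - i) ->
  2 * ((n2.+1 - (s - i)) - (n1.+1 - i)) <= i ->
  n1.+1 - i + i./2 <= kappa_star (@Kbip_adj n1.+1 n2.+1) (S_set n1.+1 n2.+1 s i).
Proof.
move=> h1 h2 h3 h4 h5 h6 h7.
apply: (@inst_kappa n1 n2 s i (n1.+1 - i + i./2) (n2.+1 - (s - i)) (n1.+1 - i)
          (fun t q => if t < n1.+1 - i then i + t else 2 * (t - (n1.+1 - i)) + odd q)).
+ lia.
+ lia.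
+ lia.
+ lia.
+ lia.
+ lia.
+ move=> t q ht hq; case: ifP => ta; lia.
+ move=> t q ht hq; case: ifP => ta; [right | left]; rewrite ?ta //; lia.
+ move=> t t' q q' ht ht' hq hq'; case: ifP => ta; case: ifP => ta'; lia.
+ move=> t ht ht'; lia.
+ move=> t t' q ht ht' hk' hq; case: ifP => ta; first lia.
  move=> hl; split; first by case: (odd q); lia.
  lia.
+ apply: cardT_bound; lia.
Qed.

Unset Implicit Arguments.
Theorem theorem3p7 (m1 m2 s i : nat) :
  2 <= m1 -> m1 <= m2 ->
  maxn 1 (s - m2) <= i -> i <= minn m1 (s - 1) ->
  m2 - m1 + 3 <= s ->
  m1 + s - m2 < 2 * i ->
  let L := m1 + s - m2 in
  let k := kappa_star (@Kbip_adj m1 m2) (S_set m1 m2 s i) in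
  [/\ 2 * i * 3 <= 4 * L -> m1 - i + i./2 <= k,
      4 * L < 2 * i * 3 -> 2 * i <= 2 * L -> m2 + i - s <= k &
      2 * L < 2 * i -> m1 <= k].
Proof.
case: m1 => [|n1]; first by [].
case: m2 => [|n2]; first by [].
move=> h1 h2 h3 h4 h5 h6 L k.
have e1 : 2 <= i by lia.
have e2 : i <= n1.+1 by lia.
have e3 : 1 <= s - i by lia.
have e4 : s - i <= n2.+1 by lia.
rewrite /k /L; split.
- move=> hc; apply: case1_l => //; lia.
- move=> hc1 hc2.
  have -> : n2.+1 + i - s = n2.+1 - (s - i) by lia.
  apply: consA_l => //; lia.
- move=> hc; apply: consA_l => //; lia.
Qed.
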